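(* Let $P\in\mathbb{N}_0^{n\times n}$ be an incidence matrix with $n\geq 3$. If $P$ is positive upper triangular, i.e. $P_{ij}=0$ for $i>j$ and $P_{ij}\geq 1$ for all $i\leq j$, then $P$ exclusively represents reducible morphisms.
   Context: Let $\Sigma=\{a_1,\dots,a_n\}$. A morphism $\varphi:\Sigma^+\to\Sigma^+$ (non-empty images) is Parikh-positive if every letter occurs in $\varphi(a_1)\cdots\varphi(a_n)$. Its incidence matrix is $P(\varphi)=(m_{i,j})$ with $m_{i,j}=|\varphi(a_j)|_{a_i}$. An automorphism is an injective morphism mapping each letter to a single letter; a morphism is reducible if it equals $\psi_2\circ\psi_1$ with neither $\psi_1,\psi_2$ an automorphism. An incidence matrix $P$ exclusively represents reducible morphisms if every Parikh-positive morphism $\varphi$ with $P(\varphi)=P$ is reducible. *)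

(* Defs.v *)
From mathcomp Require Import all_boot all_algebra.
Set Implicit Arguments. Unset Strict Implicit. Unset Printing Implicit Defensive.

(* Alphabet Sigma = {a_1,...,a_n} is 'I_n; words are seq 'I_n.
   A morphism Sigma^+ -> Sigma^+ is determined by the images of letters. *)
Definition morph (n : nat) := 'I_n -> seq 'I_n.

(* non-empty images (so that the morphism maps Sigma^+ into Sigma^+) *)
Definition nonerasing n (f : morph n) : Prop := forall a, f a != [::].

Definition ext n (f : morph n) (w : seq 'I_n) : seq 'I_n := flatten (map f w).

Definition mcomp n (g f : morph n) : morph n := fun a => ext g (f a).

Definition parikh_positive n (f : morph n) : Prop :=
  forall i : 'I_n, i \in flatten [seq f j | j <- enum 'I_n].

Definition incidence n (f : morph n) : 'M[nat]_n :=
  \matrix_(i, j) count_mem i (f j).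

Definition automorphism n (f : morph n) : Prop :=
  injective (ext f) /\ forall a, size (f a) = 1%N.

Definition reducible n (f : morph n) : Prop :=
  exists g1 g2 : morph n,
    [/\ nonerasing g1, nonerasing g2, ~ automorphism g1, ~ automorphism g2
      & forall a, f a = mcomp g2 g1 a].

Definition exclusively_reducible n (P : 'M[nat]_n) : Prop :=
  forall f : morph n, nonerasing f -> parikh_positive f ->
    incidence f = P -> reducible f.

(* Main.v *)
Require Import Defs.
From mathcomp Require Import all_boot all_algebra.

Lemma ext_id n (g : morph n) (w : seq 'I_n) :
  (forall x, x \in w -> g x = [:: x]) -> ext g w = w.
Proof.
elim: w => [|x w IH] H //=.
rewrite /ext /= H ?mem_head //; congr (_ :: _); apply: IH => y hy.
by apply: H; rewrite in_cons hy orbT.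
Qed.

Lemma size_two n (s : seq 'I_n) (x y : 'I_n) :
  x != y -> x \in s -> y \in s -> size s <> 1%N.
Proof.
move=> nxy; case: s => [|z [|? ?]] //=; rewrite !mem_seq1 => hx hy _.
by move: nxy; rewrite (eqP hx) (eqP hy) eqxx.
Qed.

Theorem proposition20 (n : nat) (P : 'M[nat]_n) :
  (3 <= n)%N ->
  (forall i j : 'I_n, (j < i)%N -> P i j = 0%N) ->
  (forall i j : 'I_n, (i <= j)%N -> (1 <= P i j)%N) ->
  exclusively_reducible P.
Proof.
move=> n3 Hlow Hup f ne _ hP.
have cnt i j : count_mem i (f j) = P i j by rewrite -hP mxE.
have memf i j : (i \in f j) = (i <= j)%N.
  apply/idP/idP.
  - move=> hi; rewrite leqNgt; apply/negP => /Hlow; rewrite -cnt => /eqP.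
    by rewrite -leqn0 leqNgt -has_count has_pred1 hi.
  - by move/Hup; rewrite -cnt -has_count has_pred1.
have h0 : (0 < n)%N by apply: leq_trans n3.
have h1 : (1 < n)%N by apply: leq_trans n3.
pose a0 := Ordinal h0. pose a1 := Ordinal h1. pose a2 := Ordinal n3.
pose g1 := fun a : 'I_n => if (a <= 1)%N then f a else [:: a].
pose g2 := fun a : 'I_n => if (a <= 1)%N then [:: a] else f a.
exists g1, g2; split.
- by move=> a; rewrite /g1; case: ifP.
- by move=> a; rewrite /g2; case: ifP.
- move=> [_ H]; move: (H a1); rewrite /g1 /=.
  apply: (@size_two _ _ a0 a1) => //; by rewrite memf.
- move=> [_ H]; move: (H a2); rewrite /g2 /=.
  apply: (@size_two _ _ a0 a2) => //; by rewrite memf.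
- move=> a; rewrite /mcomp /g1; case: ifP => ha.
  + rewrite ext_id // => x; rewrite memf /g2 => hx.
    by rewrite (leq_trans hx ha).
  + by rewrite /ext /= /g2 ha cats0.
Qed.
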